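(* Consider the non-contextual auction problem described in the context with $T\ge N\ge 3$. For any (possibly randomized) learning algorithm $\mathcal{A}$, there exist a sequence of bids $\{b_t\}_{t=1}^T\subset[0,1]^N$ and CTRs $\{\rho_i\}_{i=1}^N\subset[0,1]$ such that the expected regret of $\mathcal{A}$ is at least $\Omega(\sqrt{NT})$.
   Context: Notation: $\mathrm{smax}_i v_i$ is the second-largest entry of $v$; $\arg\max$, $\arg\mathrm{smax}$ the indices of the largest and second-largest entries, ties broken by a fixed deterministic rule. Non-contextual problem: a fixed set of $N$ ads with unknown constant CTRs $\rho_i\in[0,1]$. At each round $t\in[T]$ the learner chooses estimated CTRs $\tilde\rho_t\in[0,1]^N$ (based on past observations); bids $b_t\in[0,1]^N$ are given. The winner is $i_t=\arg\max_i b_{t,i}\tilde\rho_{t,i}$, the runner-up $j_t=\arg\mathrm{smax}_i b_{t,i}\tilde\rho_{t,i}$, the payment per click $d_t=b_{t,j_t}\tilde\rho_{t,j_t}/\tilde\rho_{t,i_t}$; the winner's ad is clicked with probability $\rho_{i_t}$. The learner observes $b_t$ and the click indicator $c_t\in\{0,1\}$ and receives $c_td_t$. Regret: $\mathrm{Reg}=\sum_{t=1}^T\mathrm{smax}_i b_{t,i}\rho_i-\sum_{t=1}^T c_td_t$. *)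

(* Defs.v *)
From HB Require Import structures.
From mathcomp Require Import all_boot all_order all_algebra.
From mathcomp Require Import all_classical all_reals all_analysis.

Set Implicit Arguments.
Unset Strict Implicit.
Unset Printing Implicit Defensive.

Import Order.TTheory GRing.Theory Num.Theory.
Local Open Scope ring_scope.

Section Auction.
Variables (R : realType) (N : nat).

Definition vecR := 'I_N -> R.

(* Index of a largest entry of F among the indices in s; ties are broken
   deterministically in favour of the earliest index of s.
   None iff s is empty. *)
Definition first_argmax (F : vecR) (s : seq 'I_N) : option 'I_N :=
  match s with
  | [::] => None
  | i0 :: s' => Some (foldl (fun j i => if F j < F i then i else j) i0 s')
  end.

Definition amax (F : vecR) : option 'I_N := first_argmax F (enum 'I_N).

Definition asmax (F : vecR) : option 'I_N :=
  match amax F with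
  | None => None
  | Some i => first_argmax F [seq j <- enum 'I_N | j != i]
  end.

(* smax_i F_i : the second-largest entry of F (0 if N < 2, irrelevant here). *)
Definition smax (F : vecR) : R :=
  match asmax F with Some j => F j | None => 0 end.

(* Observation history: for each past round, the bids b_t and the click c_t. *)
Definition history := seq (vecR * bool).

(* A deterministic learner (for a fixed internal random seed): given the past
   observations and the current bids, it outputs estimated CTRs. *)
Definition policy := history -> vecR -> vecR.

(* Expected revenue (over the clicks) of rounds t, t+1, ..., t+k-1, given the
   history h, for bids bs : nat -> vecR (round t uses bs t) and true CTRs rho. *)
Fixpoint exp_revenue (pol : policy) (bs : nat -> vecR) (rho : vecR)
    (k t : nat) (h : history) : R :=
  match k with
  | 0 => 0
  | k'.+1 =>
    let b := bs t in
    let rt := pol h b in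
    let score := fun i => b i * rt i in
    match amax score with
    | None => exp_revenue pol bs rho k' t.+1 (rcons h (b, false))
    | Some i =>
      let d := match asmax score with
               | Some j => b j * rt j / rt i
               | None => 0 end in
      rho i * (d + exp_revenue pol bs rho k' t.+1 (rcons h (b, true)))
      + (1 - rho i) * exp_revenue pol bs rho k' t.+1 (rcons h (b, false))
    end
  end.

Definition exp_regret (T : nat) (pol : policy) (bs : nat -> vecR) (rho : vecR)
    : R :=
  \sum_(t < T) smax (fun i => bs t i * rho i) - exp_revenue pol bs rho T 0 [::].

End Auction.

(* Expected regret of a randomized learner: pol ω is the deterministic policy
   obtained for the internal random seed ω ~ P; expectation over ω and clicks. *)
Definition rand_exp_regret (R : realType) (N T : nat) (d : measure_display)
    (Omega : measurableType d) (P : probability Omega R)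
    (pol : Omega -> policy R N) (bs : nat -> vecR R N) (rho : vecR R N)
    : \bar R :=
  (\int[P]_w (exp_regret T (pol w) bs rho)%:E)%E.

(* Main.v *)
Require Import Defs.
From HB Require Import structures.
From mathcomp Require Import all_boot all_order all_algebra.
From mathcomp Require Import all_classical all_reals all_analysis.
From mathcomp Require Import measurable_realfun measurable_fun_approximation.
From mathcomp Require Import ring lra zify.
Import Order.TTheory GRing.Theory Num.Theory.
Local Open Scope ring_scope.

Set Implicit Arguments.
Unset Strict Implicit.
Unset Printing Implicit Defensive.


Section ArgMax.
Variables (R : realType) (N : nat).

Lemma foldl_max (F : vecR R N) (s : seq 'I_N) (i0 : 'I_N) :
  let k := foldl (fun j i => if F j < F i then i else j) i0 s in
  F i0 <= F k /\ (forall x, x \in s -> F x <= F k) /\ (k = i0 \/ k \in s).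
Proof.
elim: s i0 => [|x s IH] i0 /=; first by split => //; split => //; left.
set i1 := (if F i0 < F x then x else i0).
have [h1 [h2 h3]] := IH i1.
have Hi0 : F i0 <= F i1 by rewrite /i1; case: ltP => // /ltW.
have Hx : F x <= F i1 by rewrite /i1; case: ltP.
split; first exact: le_trans h1.
split.
  move=> y; rewrite inE => /orP [/eqP -> | ys]; first exact: le_trans h1.
  exact: h2.
case: h3 => [-> | H]; last by right; rewrite inE H orbT.
by rewrite /i1; case: ltP => _; [right; rewrite inE eqxx | left].
Qed.

Lemma first_argmaxP (F : vecR R N) s k :
  first_argmax F s = Some k -> k \in s /\ forall x, x \in s -> F x <= F k.
Proof.
case: s => [//|i0 s] /= [<-].
have [h1 [h2 h3]] := foldl_max F s i0.
split; first by case: h3 => [-> | H]; rewrite inE ?eqxx // H orbT.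
by move=> x; rewrite inE => /orP [/eqP -> | /h2].
Qed.

Lemma first_argmax_some (F : vecR R N) s x : x \in s -> exists k, first_argmax F s = Some k.
Proof. by case: s => [//|i0 s] _ /=; eexists. Qed.

Lemma amaxP (F : vecR R N) i : amax F = Some i -> forall j, F j <= F i.
Proof. by move=> /first_argmaxP [_ H] j; apply: H; rewrite mem_enum. Qed.

Lemma smax_two (F : vecR R N) (v : R) a b : a != b -> F a = v -> F b = v ->
  (forall i, F i <= v) -> smax F = v.
Proof.
move=> ab Fa Fb Fle.
rewrite /smax /asmax.
have [i Hi] : exists i, amax F = Some i.
  by apply: (@first_argmax_some F _ a); rewrite mem_enum.
rewrite Hi.
have [c [cn cin]] : exists c, c != i /\ F c = v.
  by case: (eqVneq a i) => [ai|ai]; [exists b; rewrite -ai eq_sym | exists a].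
have cs : c \in [seq j <- enum 'I_N | j != i] by rewrite mem_filter cn mem_enum.
have [k Hk] := first_argmax_some F cs.
rewrite Hk; have [_ H] := first_argmaxP Hk.
by apply/eqP; rewrite eq_le Fle /= -cin H.
Qed.

End ArgMax.


Section Tree.
Variables (R : realType) (N : nat) (p : policy R N).

Definition b1 : vecR R N := fun _ => 1.
Definition bs1 : nat -> vecR R N := fun _ => b1.
Definition score (h : history R N) : vecR R N := fun i => b1 i * p h b1 i.
Definition win h := amax (score h).
Definition cp (al : vecR R N) h : R := match win h with Some i => al i | None => 0 end.
Definition wgt al h (x : bool) : R := if x then cp al h else 1 - cp al h.
Definition inG (G : pred 'I_N) h : R := match win h with Some i => (G i)%:R | None => 0 end.
Definition nxt (h : history R N) (x : bool) : history R N := rcons h (b1, x).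

Fixpoint pprob al h (c : seq bool) : R :=
  match c with [::] => 1 | x :: c' => wgt al h x * pprob al (nxt h x) c' end.
Fixpoint pcnt G h (c : seq bool) : R :=
  match c with [::] => 0 | x :: c' => inG G h + pcnt G (nxt h x) c' end.
Fixpoint allseq (k : nat) : seq (seq bool) :=
  match k with 0 => [:: [::]]
  | k'.+1 => [seq true :: c | c <- allseq k'] ++ [seq false :: c | c <- allseq k'] end.

Lemma sum_allseqS k (F : seq bool -> R) :
  \sum_(c <- allseq k.+1) F c =
  \sum_(c <- allseq k) F (true :: c) + \sum_(c <- allseq k) F (false :: c).
Proof. by rewrite /= big_cat !big_map. Qed.

Lemma size_allseq k c : c \in allseq k -> size c = k.
Proof.
elim: k c => [|k IH] c /=; first by rewrite inE => /eqP ->.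
by rewrite mem_cat => /orP [] /mapP [c' /IH <- ->].
Qed.

Lemma sum_pprob al k h : \sum_(c <- allseq k) pprob al h c = 1.
Proof.
elim: k h => [|k IH] h; first by rewrite /= big_seq1.
rewrite sum_allseqS /=.
rewrite -!big_distrr /= !IH /wgt; lra.
Qed.

Definition Ecnt al G k h := \sum_(c <- allseq k) pprob al h c * pcnt G h c.

Lemma sum_aux (s : seq (seq bool)) (w g : R) (P C : seq bool -> R) :
  \sum_(c <- s) (w * P c) * (g + C c) =
  g * (w * \sum_(c <- s) P c) + w * \sum_(c <- s) P c * C c.
Proof. rewrite !big_distrr /= -big_split /=; apply: eq_bigr => c _; ring. Qed.

Lemma Ecnt_S al G k h : Ecnt al G k.+1 h =
  inG G h + wgt al h true * Ecnt al G k (nxt h true)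
          + wgt al h false * Ecnt al G k (nxt h false).
Proof.
rewrite /Ecnt sum_allseqS /= !sum_aux !sum_pprob /wgt; ring.
Qed.

Lemma exp_revenue_S al k t h :
  exp_revenue p bs1 al k.+1 t h =
  match win h with
  | None => exp_revenue p bs1 al k t.+1 (nxt h false)
  | Some i =>
    let d := match asmax (score h) with
             | Some j => b1 j * p h b1 j / p h b1 i
             | None => 0 end in
    al i * (d + exp_revenue p bs1 al k t.+1 (nxt h true))
    + (1 - al i) * exp_revenue p bs1 al k t.+1 (nxt h false)
  end.
Proof. by []. Qed.

Hypothesis p01 : forall h b i, 0 <= p h b i <= 1.

Lemma d01 h i : win h = Some i ->
  0 <= match asmax (score h) with
       | Some j => b1 j * p h b1 j / p h b1 i | None => 0 end <= 1.
Proof.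
move=> /amaxP Hm; case: (asmax _) => [j|]; last by rewrite lexx ler01.
have := Hm j; rewrite /score /b1 !mul1r => Hji.
have [/andP [pj0 pj1]] := p01 h b1 j; have /andP [pi0 pi1] := p01 h b1 i.
rewrite divr_ge0 //=.
have [->|pi_ne0] := eqVneq (p h b1 i) 0; first by rewrite invr0 mulr0 ler01.
by rewrite ler_pdivrMr ?mul1r // lt_neqAle eq_sym pi_ne0.
Qed.

End Tree.


Section Bounds.
Variables (R : realType) (N : nat) (p : policy R N).
Hypothesis p01 : forall h b i, 0 <= p h b i <= 1.

Definition prob01 (al : vecR R N) := forall i, 0 <= al i <= 1.

Lemma cp01 al h : prob01 al -> 0 <= cp p al h <= 1.
Proof. by move=> H; rewrite /cp; case: win => [i|]; [apply: H | rewrite lexx ler01]. Qed.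

Lemma wgt_ge0 al h x : prob01 al -> 0 <= wgt p al h x.
Proof. move=> /(cp01 h) /andP [H0 H1]; rewrite /wgt; case: x => //; lra. Qed.

Lemma pprob_ge0 al h c : prob01 al -> 0 <= pprob p al h c.
Proof.
move=> H; elim: c h => [|x c IH] h /=; first exact: ler01.
by apply: mulr_ge0; [apply: wgt_ge0 | apply: IH].
Qed.

Lemma inG01 (G : pred 'I_N) h : 0 <= inG p G h <= 1.
Proof. by rewrite /inG; case: win => [i|]; [case: (G i); rewrite ?lexx ?ler01 | rewrite lexx ler01]. Qed.

Lemma pcnt_bnd (G : pred 'I_N) h c : 0 <= pcnt p G h c <= (size c)%:R.
Proof.
elim: c h => [|x c IH] h /=; first by rewrite lexx.
have /andP [a1 a2] := inG01 G h; have /andP [b1 b2] := IH (nxt h x).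
rewrite -addn1 natrD; apply/andP; split; lra.
Qed.

Lemma rev_ub al (G : pred 'I_N) (v eps : R) : prob01 al ->
  (forall i, al i <= v - eps + eps * (G i)%:R) -> 0 <= v - eps -> 0 <= eps ->
  forall k t h, exp_revenue p (@bs1 R N) al k t h <= k%:R * (v - eps) + eps * Ecnt p al G k h.
Proof.
move=> Hal Hv Hve He; elim=> [|k IH] t h.
  have -> : Ecnt p al G 0 h = 0 by rewrite /Ecnt big_seq1 /= mulr0.
  by rewrite /= mul0r mulr0 addr0.
rewrite exp_revenue_S Ecnt_S.
have HT := IH t.+1 (nxt h true); have HF := IH t.+1 (nxt h false).
rewrite /wgt /inG /cp in HT HF *.
case Hw: (win p h) => [i|] /=.
  have /andP [d0 d1] := d01 p01 Hw.
  set d := match _ with Some j => _ | None => _ end in d0 d1 *.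
  have /andP [a0 a1] := Hal i. have := Hv i.
  set g := (G i)%:R; set ET := Ecnt _ _ _ _ _ in HT *; set EF := Ecnt _ _ _ _ _ in HF *.
  set RT := exp_revenue _ _ _ _ _ _ in HT *; set RF := exp_revenue _ _ _ _ _ _ in HF *.
  rewrite -natr1 => Hvi.
  have e1 : al i * (d + RT) <= al i * (1 + k%:R * (v - eps) + eps * ET).
    by apply: ler_wpM2l => //; lra.
  have e2 : (1 - al i) * RF <= (1 - al i) * (k%:R * (v - eps) + eps * EF).
    by apply: ler_wpM2l => //; lra.
  have : al i * (1 + k%:R * (v - eps) + eps * ET) + (1 - al i) * (k%:R * (v - eps) + eps * EF)
     = al i + k%:R * (v - eps) + eps * (al i * ET + (1 - al i) * EF) by ring.
  lra.
rewrite -natr1; move: HF.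
set EF := Ecnt _ _ _ _ _; set ET := Ecnt _ _ _ _ _.
rewrite mul0r subr0 mul1r add0r; lra.
Qed.

Lemma rev_bnd al : prob01 al -> forall k t h,
  0 <= exp_revenue p (@bs1 R N) al k t h <= k%:R.
Proof.
move=> Hal; elim=> [|k IH] t h; first by rewrite /= lexx.
rewrite exp_revenue_S.
have /andP [T0 T1] := IH t.+1 (nxt h true); have /andP [F0 F1] := IH t.+1 (nxt h false).
rewrite -natr1.
case Hw: (win p h) => [i|] /=; last by apply/andP; split; lra.
have /andP [d0 d1] := d01 p01 Hw.
set d := match _ with Some j => _ | None => _ end in d0 d1 *.
have /andP [a0 a1] := Hal i.
set RT := exp_revenue _ _ _ _ _ _ in T0 T1 *; set RF := exp_revenue _ _ _ _ _ _ in F0 F1 *.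
apply/andP; split; first by apply: addr_ge0; apply: mulr_ge0 => //; lra.
have e1 : al i * (d + RT) <= al i * (1 + k%:R) by apply: ler_wpM2l => //; lra.
have e2 : (1 - al i) * RF <= (1 - al i) * k%:R by apply: ler_wpM2l => //; lra.
lra.
Qed.

End Bounds.


Section BC.
Variables (R : realType) (N : nat) (p : policy R N).
Variables (al be : vecR R N).
Hypotheses (Hal : prob01 al) (Hbe : prob01 be).

Definition BCs k h := \sum_(c <- allseq k) Num.sqrt (pprob p al h c * pprob p be h c).

Lemma BCs_S k h : BCs k.+1 h =
  Num.sqrt (wgt p al h true * wgt p be h true) * BCs k (nxt h true) +
  Num.sqrt (wgt p al h false * wgt p be h false) * BCs k (nxt h false).
Proof.
rewrite /BCs sum_allseqS /= !big_distrr /=.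
congr (_ + _); apply: eq_bigr => c _; rewrite mulrACA sqrtrM //.
  by apply: mulr_ge0; apply: (wgt_ge0 _ _ true).
by apply: mulr_ge0; apply: (wgt_ge0 _ _ false).
Qed.

Lemma BC_lb (G : pred 'I_N) (kap : R) : 0 <= kap ->
  (forall h i, win p h = Some i -> cp p al h = 1/2 /\
     expR (- (2 * kap) * inG p G h) <=
     4 * Num.sqrt (wgt p al h true * wgt p be h true) *
         Num.sqrt (wgt p al h false * wgt p be h false)) ->
  forall k h, expR (- kap * Ecnt p al G k h) <= BCs k h.
Proof.
move=> k0 Hn; elim=> [|k IH] h.
  rewrite /Ecnt /BCs !big_seq1 /= mulr0 mulr0 expR0 mulr1 sqrtr1 //.
rewrite Ecnt_S BCs_S.
have HT := IH (nxt h true); have HF := IH (nxt h false).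
case Hw: (win p h) => [i|].
  have [Hc H4] := Hn h i Hw.
  move: H4; rewrite /wgt Hc.
  set s := Num.sqrt _; set t := Num.sqrt _.
  set g := inG p G h.
  set ET := Ecnt _ _ _ _ _ in HT *; set EF := Ecnt _ _ _ _ _ in HF *.
  set x := BCs k _ in HT *; set y := BCs k _ in HF *.
  move=> H4.
  have s0 : 0 <= s by apply: sqrtr_ge0.
  have t0 : 0 <= t by apply: sqrtr_ge0.
  set z := expR _.
  have z0 : 0 <= z by apply: expR_ge0.
  have zz : z * z = expR (- (2 * kap) * g) * (expR (- kap * ET) * expR (- kap * EF)).
    by rewrite -!expRD; congr expR; field.
  have x0 : 0 <= expR (- kap * ET) by apply: expR_ge0.
  have y0 : 0 <= expR (- kap * EF) by apply: expR_ge0.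
  have e1 : expR (- kap * ET) * expR (- kap * EF) <= x * y.
    by apply: ler_pM.
  have e2 : z * z <= 4 * s * t * (x * y).
    rewrite zz; apply: ler_pM => //; try exact: expR_ge0;
    try exact: mulr_ge0 (expR_ge0 _) (expR_ge0 _).
  have xx0 : 0 <= x by apply: le_trans HT.
  have yy0 : 0 <= y by apply: le_trans HF.
  have e3 : 4 * s * t * (x * y) <= (s * x + t * y) * (s * x + t * y).
    have : 0 <= (s * x - t * y) ^+ 2 by apply: sqr_ge0.
    rewrite !expr2 => H; nra.
  have sxty : 0 <= s * x + t * y by apply: addr_ge0; apply: mulr_ge0.
  have : z * z <= (s * x + t * y) * (s * x + t * y) by apply: le_trans e3.
  move=> H; rewrite -/z; nra.
have Ca : cp p al h = 0 by rewrite /cp Hw.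
have Cb : cp p be h = 0 by rewrite /cp Hw.
have Gz : inG p G h = 0 by rewrite /inG Hw.
rewrite /wgt Ca Cb Gz.
have -> : - kap * (0 + 0 * Ecnt p al G k (nxt h true) + (1 - 0) * Ecnt p al G k (nxt h false)) = - kap * Ecnt p al G k (nxt h false) by ring.
have -> : Num.sqrt ((0:R) * 0) = 0 by rewrite mul0r sqrtr0.
have -> : Num.sqrt ((1 - 0) * (1 - 0) : R) = 1 by rewrite subr0 mul1r sqrtr1.
by rewrite mul0r add0r mul1r.
Qed.

Lemma leaf_ineq (a b C k : R) : 0 <= a -> 0 <= b -> 0 <= C -> C <= k ->
  (b * b - a * a) * C <= k * (6 * (a * a + b * b - 2 * (a * b)) + (a * a + b * b) / 12).
Proof.
move=> a0 b0 C0 Ck.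
have M0 : 0 <= 6 * (a * a + b * b - 2 * (a * b)) + (a * a + b * b) / 12.
  have : 0 <= (a - b) ^+ 2 by apply: sqr_ge0.
  rewrite expr2 => H; have : 0 <= a * a by nra.
  have : 0 <= b * b by nra. lra.
have H1 : b * b - a * a <= 6 * (a * a + b * b - 2 * (a * b)) + (a * a + b * b) / 12.
  have : 0 <= (b - a - (a + b) / 12) ^+ 2 by apply: sqr_ge0.
  rewrite expr2 => H; nra.
case: (lerP 0 (b * b - a * a)) => Hs.
  apply: le_trans (_ : (b * b - a * a) * k <= _).
    by apply: ler_wpM2l.
  by rewrite mulrC; apply: ler_wpM2l => //; nra.
apply: le_trans (_ : 0 <= _); first by nra.
by apply: mulr_ge0 => //; lra.
Qed.

Lemma TV_bound (G : pred 'I_N) k h :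
  Ecnt p be G k h - Ecnt p al G k h <= k%:R * (12 * (1 - BCs k h) + 1/6).
Proof.
have -> : k%:R * (12 * (1 - BCs k h) + 1/6) =
  \sum_(c <- allseq k) k%:R * (6 * (pprob p al h c + pprob p be h c
       - 2 * Num.sqrt (pprob p al h c * pprob p be h c))
     + (pprob p al h c + pprob p be h c) / 12).
  have E c : k%:R * (6 * (pprob p al h c + pprob p be h c
       - 2 * Num.sqrt (pprob p al h c * pprob p be h c))
     + (pprob p al h c + pprob p be h c) / 12) =
     (k%:R * (6 + 1/12)) * pprob p al h c + (k%:R * (6 + 1/12)) * pprob p be h c
     + (- (12 * k%:R)) * Num.sqrt (pprob p al h c * pprob p be h c).
    by field.
  rewrite (eq_bigr _ (fun c _ => E c)) !big_split /= -!big_distrr /= !sum_pprob /BCs.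
  by field.
rewrite /Ecnt.
rewrite -sumrB big_seq [X in _ <= X]big_seq; apply: ler_sum => c cin.
rewrite -mulrBl.
have Pa := pprob_ge0 p h c Hal; have Pb := pprob_ge0 p h c Hbe.
have /andP [C0 C1] := pcnt_bnd p G h c.
rewrite (size_allseq cin) in C1.
have Sab : Num.sqrt (pprob p al h c * pprob p be h c) =
  Num.sqrt (pprob p al h c) * Num.sqrt (pprob p be h c) by rewrite sqrtrM.
have Ea : pprob p al h c = Num.sqrt (pprob p al h c) * Num.sqrt (pprob p al h c).
  by rewrite -expr2 sqr_sqrtr.
have Eb : pprob p be h c = Num.sqrt (pprob p be h c) * Num.sqrt (pprob p be h c).
  by rewrite -expr2 sqr_sqrtr.
rewrite Sab; move: (Num.sqrt (pprob p al h c)) (Num.sqrt (pprob p be h c)) (sqrtr_ge0 (pprob p al h c)) (sqrtr_ge0 (pprob p be h c)) Ea Eb.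
move=> a b a0 b0 -> ->.
exact: leaf_ineq.
Qed.

End BC.


Section Env.
Variables (R : realType) (N : nat).
Hypothesis N2 : (2 <= N)%N.

Definition Gj (j : 'I_N) : pred 'I_N := fun i => (i == j) || (i == ordS j).
Definition rho0 : vecR R N := fun _ => 1/2.
Definition rhoj (eps : R) (j : 'I_N) : vecR R N := fun i => 1/2 + eps * (Gj j i)%:R.

Lemma ordS_neq (j : 'I_N) : j != ordS j.
Proof.
apply/eqP => /(congr1 val) /=.
case: (ltnP j.+1 N) => H.
  by rewrite modn_small // => E; lia.
have -> : j.+1 = N by have := ltn_ord j; lia.
rewrite modnn => j0; move: H; rewrite j0; lia.
Qed.

Lemma sum_Gj (i : 'I_N) : \sum_(j < N) ((Gj j i)%:R : R) <= 2.
Proof.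
apply: le_trans (_ : \sum_(j < N) (((i == j)%:R : R) + (i == ordS j)%:R) <= _).
  apply: ler_sum => j _; rewrite /Gj.
  by case: (i == j); case: (i == ordS j); rewrite /= ?addr0 ?add0r ?lexx ?ler0n //; lra.
rewrite big_split /=.
have E1 : \sum_(j < N) ((i == j)%:R : R) = 1.
  rewrite (bigD1 i) //= eqxx big1 ?addr0 // => j /negbTE; rewrite eq_sym => ->; done.
have E2 : \sum_(j < N) ((i == ordS j)%:R : R) = 1.
  rewrite (bigD1 (ord_pred i)) //= ord_predK eqxx big1 ?addr0 // => j Hj.
  case: eqP => // Hij; move: Hj; rewrite Hij ordSK eqxx //.
rewrite E1 E2; lra.
Qed.

Lemma rho0_01 : prob01 rho0.
Proof. by move=> i; rewrite /rho0; apply/andP; split; lra. Qed.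

Lemma rhoj_01 eps j : 0 <= eps <= 1/2 -> prob01 (rhoj eps j).
Proof.
move=> /andP [e0 e1] i; rewrite /rhoj.
by case: (Gj j i); rewrite ?mulr1 ?mulr0; apply/andP; split; lra.
Qed.

Lemma smax_rhoj eps j t : 0 <= eps ->
  smax (fun i => @bs1 R N t i * rhoj eps j i) = 1/2 + eps.
Proof.
move=> e0; apply: (smax_two (a := j) (b := ordS j)).
- exact: ordS_neq.
- by rewrite /bs1 /b1 /rhoj /Gj eqxx mul1r mulr1.
- by rewrite /bs1 /b1 /rhoj /Gj eqxx orbT mul1r mulr1.
- move=> i; rewrite /bs1 /b1 /rhoj mul1r.
  by case: (Gj j i); rewrite ?mulr1 ?mulr0; lra.
Qed.

End Env.


Lemma le_4sqrt (R : realType) (z a b : R) : 0 <= a -> 0 <= b -> 0 <= z ->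
  z * z <= 16 * a * b -> z <= 4 * Num.sqrt a * Num.sqrt b.
Proof.
move=> a0 b0 z0 H.
have y0 : 0 <= 4 * Num.sqrt a * Num.sqrt b by rewrite !mulr_ge0 ?sqrtr_ge0.
have yy : (4 * Num.sqrt a * Num.sqrt b) * (4 * Num.sqrt a * Num.sqrt b) = 16 * a * b.
  have Ea : Num.sqrt a * Num.sqrt a = a by rewrite -expr2 sqr_sqrtr.
  have Eb : Num.sqrt b * Num.sqrt b = b by rewrite -expr2 sqr_sqrtr.
  by rewrite mulrACA [X in X * _ = _]mulrACA Ea Eb; field.
rewrite -yy in H; nra.
Qed.

Lemma node_ineq (R : realType) (eps kap : R) (g : bool) :
  0 <= eps -> eps * eps <= 1/8 -> kap = 2 * (eps * eps) ->
  expR (- (2 * kap) * g%:R) <=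
  4 * Num.sqrt (1/2 * (1/2 + eps * g%:R)) * Num.sqrt ((1 - 1/2) * (1 - (1/2 + eps * g%:R))).
Proof.
move=> e0 e8 ->.
have eh : eps <= 1/2.
  rewrite leNgt; apply/negP => H.
  have : 1/2 * (1/2) < eps * eps by apply: ltr_pM => //; lra.
  lra.
case: g; rewrite /= ?mulr1 ?mulr0.
  apply: le_4sqrt; [apply: mulr_ge0; lra | apply: mulr_ge0; lra | exact: expR_ge0 | ].
  set z := expR _.
  have zz : z * z * expR (8 * (eps * eps)) = 1.
    by rewrite /z -!expRD (_ : _ + _ + _ = 0) ?expR0 //; ring.
  have ee := expR_ge1Dx (8 * (eps * eps)).
  have z0 : 0 <= z * z by apply: mulr_ge0; apply: expR_ge0.
  have : z * z * (1 + 8 * (eps * eps)) <= 1.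
    by rewrite -[X in _ <= X]zz; apply: ler_wpM2l.
  have -> : 16 * (1 / 2 * (1 / 2 + eps)) * ((1 - 1 / 2) * (1 - (1 / 2 + eps))) =
            1 - 4 * (eps * eps) by field.
  move=> H; nra.
rewrite expR0 addr0.
apply: le_4sqrt; [apply: mulr_ge0; lra | apply: mulr_ge0; lra | lra | ].
have -> : 16 * (1 / 2 * (1 / 2)) * ((1 - 1 / 2) * (1 - 1 / 2)) = 1 :> R by field.
by rewrite mulr1.
Qed.


Section Main.
Variables (R : realType) (N T : nat).
Hypotheses (N3 : (3 <= N)%N) (NT : (N <= T)%N).

Definition sNT : R := Num.sqrt (N%:R * T%:R).
Definition epsT : R := sNT / (24 * T%:R).
Definition kapT : R := 2 * (epsT * epsT).

Lemma Tpos : 0 < T%:R :> R.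
Proof. rewrite ltr0n; lia. Qed.

Lemma sNT_sq : sNT * sNT = N%:R * T%:R.
Proof. by rewrite /sNT -expr2 sqr_sqrtr // mulr_ge0. Qed.

Lemma sNT_ge0 : 0 <= sNT.
Proof. exact: sqrtr_ge0. Qed.

Lemma sNT_leT : sNT <= T%:R.
Proof.
have h1 := sNT_sq; have h2 := sNT_ge0; have h3 := Tpos.
have h4 : (N%:R : R) <= T%:R by rewrite ler_nat.
have h5 : (N%:R : R) * T%:R <= T%:R * T%:R by apply: ler_wpM2r => //; apply: ltW.
nra.
Qed.

Lemma eps_ge0 : 0 <= epsT.
Proof. by rewrite /epsT divr_ge0 ?sNT_ge0 // mulr_ge0 // ltW // Tpos. Qed.

Lemma eps_le : epsT <= 1/24.
Proof.
rewrite /epsT ler_pdivrMr; last by rewrite mulr_gt0 // Tpos.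
have := sNT_leT; lra.
Qed.

Lemma eps_sq8 : epsT * epsT <= 1/8.
Proof.
have := eps_le; have := eps_ge0 => a b.
have : epsT * epsT <= 1/24 * (1/24) by apply: ler_pM.
lra.
Qed.

Lemma kap_eq : 24 * kapT * (T%:R * T%:R) = N%:R * T%:R / 12.
Proof.
have Tn : T%:R != 0 :> R by apply: lt0r_neq0; exact: Tpos.
rewrite /kapT /epsT.
rewrite (_ : 24 * (2 * (sNT / (24 * T%:R) * (sNT / (24 * T%:R)))) * (T%:R * T%:R)
   = (sNT * sNT) / 12); last by field.
by rewrite sNT_sq.
Qed.

Variable (p : policy R N).
Hypothesis p01 : forall h b i, 0 <= p h b i <= 1.

Definition mj (j : 'I_N) := Ecnt p (rhoj epsT j) (Gj j) T [::].
Definition nj (j : 'I_N) := Ecnt p (@rho0 R N) (Gj j) T [::].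

Lemma N2 : (2 <= N)%N.
Proof. lia. Qed.

Lemma rhoj01 (j : 'I_N) : prob01 (rhoj epsT j).
Proof. apply: rhoj_01; rewrite eps_ge0 /=; have := eps_le; lra. Qed.

Lemma regret_lb (j : 'I_N) : epsT * (T%:R - mj j) <= exp_regret T p (@bs1 R N) (rhoj epsT j).
Proof.
rewrite /exp_regret.
rewrite (eq_bigr (fun _ => 1/2 + epsT)); last by move=> t _; apply: smax_rhoj; [exact: N2 | exact: eps_ge0].
rewrite sumr_const card_ord -mulr_natl.
have Hv : forall i, rhoj epsT j i <= 1/2 + epsT - epsT + epsT * (Gj j i)%:R.
  by move=> i; rewrite /rhoj; lra.
have He := eps_ge0.
have Hve : 0 <= 1/2 + epsT - epsT by lra.
have H := rev_ub p01 (rhoj01 j) Hv Hve He T 0 [::].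
rewrite -/(mj j) in H.
set rv := exp_revenue _ _ _ _ _ _ in H *.
nra.
Qed.


Lemma m_le (j : 'I_N) : mj j <= nj j + T%:R * (12 * kapT * nj j + 1/6).
Proof.
have H := TV_bound p (@rho0_01 R N) (rhoj01 j) (Gj j) T [::].
have k0 : 0 <= kapT by rewrite /kapT mulr_ge0 // mulr_ge0 // eps_ge0.
have Hn : forall h i, win p h = Some i -> cp p (@rho0 R N) h = 1/2 /\ expR (- (2 * kapT) * inG p (Gj j) h) <=
     4 * Num.sqrt (wgt p (@rho0 R N) h true * wgt p (rhoj epsT j) h true) *
         Num.sqrt (wgt p (@rho0 R N) h false * wgt p (rhoj epsT j) h false).
  move=> h i Hw; rewrite /wgt /cp /inG Hw /rho0 /rhoj; split => //.
  by apply: node_ineq; [exact: eps_ge0 | exact: eps_sq8 | ].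
have B := BC_lb (@rho0_01 R N) (rhoj01 j) k0 Hn T [::].
have E := expR_ge1Dx (- kapT * nj j).
rewrite -/(mj j) -/(nj j) in H; rewrite -/(nj j) in B.
set bc := BCs _ _ _ _ _ in H B.
have : 1 - bc <= kapT * nj j by lra.
have T0 := Tpos.
move=> H2.
have : T%:R * (12 * (1 - bc) + 1/6) <= T%:R * (12 * kapT * nj j + 1/6).
  by apply: ler_wpM2l; [apply: ltW | lra].
lra.
Qed.

Lemma sum_pcnt h c : \sum_(j < N) pcnt p (Gj j) h c <= 2 * (size c)%:R.
Proof.
elim: c h => [|x c IH] h /=; first by rewrite big1 ?mulr0.
rewrite big_split /=.
have : \sum_(j < N) inG p (Gj j) h <= 2.
  rewrite /inG; case: (win p h) => [i|]; first exact: sum_Gj.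
  by rewrite big1 //; lra.
have := IH (nxt h x); rewrite -natr1; lra.
Qed.

Lemma sum_n : \sum_(j < N) nj j <= 2 * T%:R.
Proof.
rewrite /nj /Ecnt exchange_big /=.
apply: le_trans (_ : \sum_(c <- allseq T) pprob p (@rho0 R N) [::] c * (2 * T%:R) <= _).
  rewrite big_seq [X in _ <= X]big_seq; apply: ler_sum => c cin.
  rewrite -big_distrr /=; apply: ler_wpM2l; first exact: pprob_ge0 (@rho0_01 R N).
  by rewrite -(size_allseq cin); apply: sum_pcnt.
by rewrite -big_distrl /= sum_pprob mul1r.
Qed.

Lemma main_det : N%:R * (sNT / 288) <= \sum_(j < N) exp_regret T p (@bs1 R N) (rhoj epsT j).
Proof.
have e0 := eps_ge0; have T0 := Tpos; have K := kap_eq; have S := sum_n.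
have n3 : 3 <= N%:R :> R by rewrite (ler_nat R 3 N).
apply: le_trans (_ : \sum_(j < N) (epsT * (5/6 * T%:R) - epsT * (1 + 12 * kapT * T%:R) * nj j) <= _); last first.
  apply: ler_sum => j _; apply: le_trans (regret_lb j).
  have := m_le j => Hm.
  have -> : epsT * (5/6 * T%:R) - epsT * (1 + 12 * kapT * T%:R) * nj j =
    epsT * (T%:R - (nj j + T%:R * (12 * kapT * nj j + 1/6))) by field.
  by apply: ler_wpM2l => //; lra.
rewrite sumrB sumr_const card_ord -big_distrr /= -mulr_natl.
have k0 : 0 <= epsT * (1 + 12 * kapT * T%:R).
  apply: mulr_ge0 => //; have : 0 <= kapT by rewrite /kapT mulr_ge0 // mulr_ge0.
  move=> k0; have : 0 <= kapT * T%:R by apply: mulr_ge0 => //; apply: ltW.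
  lra.
have H1 : epsT * (1 + 12 * kapT * T%:R) * \sum_(j < N) nj j <=
          epsT * (1 + 12 * kapT * T%:R) * (2 * T%:R) by apply: ler_wpM2l.
apply: le_trans (_ : N%:R * (epsT * (5 / 6 * T%:R)) - epsT * (1 + 12 * kapT * T%:R) * (2 * T%:R) <= _); last by lra.
have -> : N%:R * (epsT * (5 / 6 * T%:R)) - epsT * (1 + 12 * kapT * T%:R) * (2 * T%:R) =
   epsT * T%:R * (5/6 * N%:R - 2) - epsT * (24 * kapT * (T%:R * T%:R)) by ring.
rewrite K.
have -> : sNT = epsT * (24 * T%:R) by rewrite /epsT mulfVK // lt0r_neq0 // mulr_gt0.
have : 0 <= epsT * T%:R by apply: mulr_ge0 => //; apply: ltW.
move=> eT.
rewrite mulr1.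
have -> : N%:R * (epsT * (24 * T%:R) / 288) = epsT * T%:R * (N%:R / 12) by field.
have -> : epsT * T%:R * (5 / 6 * N%:R - 2) - epsT * (N%:R * T%:R / 12) =
          epsT * T%:R * (3/4 * N%:R - 2) by field.
apply: ler_wpM2l => //; lra.
Qed.

End Main.


Section Meas.
Variables (d : measure_display) (Omega : measurableType d) (R : realType) (N : nat).

Definition mQ (X : eqType) (g : Omega -> X) :=
  forall x, measurable_fun setT (fun w => g w == x).

Lemma mQ_cst (X : eqType) (x0 : X) : mQ (fun _ => x0).
Proof. by move=> x; apply: measurable_cst. Qed.

Lemma mQ_if (X : eqType) (c : Omega -> bool) (g1 g2 : Omega -> X) :
  measurable_fun setT c -> mQ g1 -> mQ g2 -> mQ (fun w => if c w then g1 w else g2 w).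
Proof.
move=> mc m1 m2 x.
have -> : (fun w => (if c w then g1 w else g2 w) == x) =
          (fun w => if c w then g1 w == x else g2 w == x).
  by apply: funext => w; case: (c w).
exact: measurable_fun_ifT.
Qed.

Lemma mQ_Some (X : eqType) (g : Omega -> X) : mQ g -> mQ (fun w => Some (g w)).
Proof.
move=> mg [x|].
  have -> : (fun w => Some (g w) == Some x) = (fun w => g w == x) by [].
  exact: mg.
exact: measurable_cst.
Qed.

Lemma msel (X : finType) (g : Omega -> X) (H : X -> Omega -> R) :
  mQ g -> (forall x, measurable_fun setT (H x)) ->
  measurable_fun setT (fun w => H (g w) w).
Proof.
move=> mg mH.
have -> : (fun w => H (g w) w) = (fun w => \sum_(x : X) (if g w == x then H x w else 0)).
  apply: funext => w; rewrite (bigD1 (g w)) //= eqxx big1 ?addr0 // => x /negbTE.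
  by rewrite eq_sym => ->.
apply: measurable_sum => x.
apply: measurable_fun_ifT => //; exact: measurable_cst.
Qed.

Variable F : Omega -> vecR R N.
Hypothesis mF : forall i, measurable_fun setT (fun w => F w i).

Lemma mQ_foldl s (g0 : Omega -> 'I_N) : mQ g0 ->
  mQ (fun w => foldl (fun j i => if F w j < F w i then i else j) (g0 w) s).
Proof.
elim: s g0 => [|x s IH] g0 mg0 //=.
apply: (IH (fun w => if F w (g0 w) < F w x then x else g0 w)).
apply: mQ_if; [|exact: mQ_cst|exact: mg0].
apply: measurable_fun_ltr => //.
exact: (msel (H := fun i w => F w i)).
Qed.

Lemma mQ_first s : mQ (fun w => first_argmax (F w) s).
Proof.
case: s => [|i0 s] /=; first exact: mQ_cst.
apply: mQ_Some; apply: mQ_foldl; exact: mQ_cst.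
Qed.

End Meas.


Section Rand.
Variables (d : measure_display) (Omega : measurableType d) (R : realType) (N : nat).
Variable pol : Omega -> policy R N.
Hypothesis H01 : forall w h b i, 0 <= pol w h b i <= 1.
Hypothesis Hm : forall h b i, measurable_fun setT (fun w => pol w h b i).

Lemma mscore h i : measurable_fun setT (fun w => score (pol w) h i).
Proof. rewrite /score; apply: measurable_funM; [exact: measurable_cst | exact: Hm]. Qed.

Lemma mwin h : mQ (fun w => win (pol w) h).
Proof. exact: (mQ_first (F := fun w => score (pol w) h) (mscore h)). Qed.

Lemma mrev al k t h :
  measurable_fun setT (fun w => exp_revenue (pol w) (@bs1 R N) al k t h).
Proof.
elim: k t h => [|k IH] t h; first exact: measurable_cst.
pose DH (i : 'I_N) (o : option 'I_N) (w : Omega) : R :=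
  match o with Some j => @b1 R N j * pol w h (@b1 R N) j * (pol w h (@b1 R N) i `^ (-1)) | None => 0 end.
pose Dsel i w := DH i (first_argmax (score (pol w) h) [seq j <- enum 'I_N | j != i]) w.
pose Hs (o : option 'I_N) (w : Omega) : R :=
  match o with
  | None => exp_revenue (pol w) (@bs1 R N) al k t.+1 (nxt h false)
  | Some i => al i * (Dsel i w + exp_revenue (pol w) (@bs1 R N) al k t.+1 (nxt h true))
      + (1 - al i) * exp_revenue (pol w) (@bs1 R N) al k t.+1 (nxt h false)
  end.
have -> : (fun w => exp_revenue (pol w) (@bs1 R N) al k.+1 t h) = (fun w => Hs (win (pol w) h) w).
  apply: funext => w; rewrite exp_revenue_S /Hs.
  case Hw: (win (pol w) h) => [i|] //=.
  rewrite /Dsel /DH /asmax.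
  have -> : amax (score (pol w) h) = Some i := Hw.
  case: (first_argmax _ _) => [j|] //.
  rewrite powR_inv1 //; by have /andP [] := H01 w h (@b1 R N) i.
apply: msel; first exact: mwin.
case=> [i|]; last exact: IH.
apply: measurable_funD; apply: measurable_funM; try exact: measurable_cst.
  apply: measurable_funD; last exact: IH.
  apply: msel; first exact: (mQ_first (F := fun w => score (pol w) h) (mscore h)).
  case=> [j|]; last exact: measurable_cst.
  apply: measurable_funM; first (apply: measurable_funM; [exact: measurable_cst | exact: Hm]).
have mp := @measurable_powR R (-1).
  have mh := Hm h (@b1 R N) i.
  have := measurableT_comp mp mh.
  exact.
exact: IH.
Qed.

End Rand.

Lemma regret_eq (R : realType) (N T : nat) (N3 : (3 <= N)%N) (NT : (N <= T)%N)
  (p : policy R N) (j : 'I_N) :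
  exp_regret T p (@bs1 R N) (rhoj (epsT R N T) j) =
  T%:R * (1/2 + epsT R N T) - exp_revenue p (@bs1 R N) (rhoj (epsT R N T) j) T 0 [::].
Proof.
rewrite /exp_regret.
rewrite (eq_bigr (fun _ => 1/2 + epsT R N T)); last first.
  by move=> t _; apply: smax_rhoj; [exact: N2 N3 NT | exact: eps_ge0].
by rewrite sumr_const card_ord mulr_natl.
Qed.

Theorem theorem2_aux (R : realType) :
  exists c : R, 0 < c /\
  forall (N T : nat), (3 <= N)%N -> (N <= T)%N ->
  forall (d : measure_display) (Omega : measurableType d)
         (P : probability Omega R) (pol : Omega -> policy R N),
    (forall w h b i, 0 <= pol w h b i <= 1) ->
    (forall h b i, measurable_fun setT (fun w => pol w h b i)) ->
    exists (bs : nat -> vecR R N) (rho : vecR R N),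
      (forall t i, 0 <= bs t i <= 1) /\
      (forall i, 0 <= rho i <= 1) /\
      ((c * Num.sqrt (N%:R * T%:R))%:E <= rand_exp_regret T P pol bs rho)%E.
Proof.
exists (1/288); split; first by rewrite divr_gt0.
move=> N T N3 NT d Omega P pol H01 Hm.
set eps := epsT R N T.
pose f (j : 'I_N) (w : Omega) := exp_regret T (pol w) (@bs1 R N) (rhoj eps j).
have fE j w : f j w = T%:R * (1/2 + eps) - exp_revenue (pol w) (@bs1 R N) (rhoj eps j) T 0 [::].
  exact: regret_eq.
have mf j : measurable_fun setT (f j).
  rewrite (_ : f j = fun w => T%:R * (1/2 + eps) - exp_revenue (pol w) (@bs1 R N) (rhoj eps j) T 0 [::]);
    last by apply: funext => w; exact: fE.
  apply: measurable_funB; first exact: measurable_cst.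
  exact: mrev.
have bf j : [bounded f j x | x in setT].
  exists (T%:R * (1/2 + eps) + T%:R); split; first exact: num_real.
  move=> M HM x _ /=; rewrite fE.
  have /andP [r0 r1] := rev_bnd (H01 x) (rhoj01 R N3 NT j) T 0 [::].
  have e0 : 0 <= eps := eps_ge0 R N T.
  have T0 : 0 <= T%:R :> R by [].
  have : 0 <= T%:R * (1/2 + eps) by apply: mulr_ge0 => //; lra.
  move=> hT; rewrite ler_norml; apply/andP; split; lra.
have intf j : P.-integrable setT (EFin \o f j).
  apply: (measurable_bounded_integrable measurableT _ (mf j) (bf j)).
  by move: (probability_setT P) => /= ->; rewrite ltry.
set B := sNT R N T / 288.
have Hsum : ((N%:R * B)%:E <= \sum_(j < N) (\int[P]_w (f j w)%:E))%E.
  rewrite -integral_sum //.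
  apply: (@le_trans _ _ (\int[P]_w (cst (N%:R * B)%:E w))%E).
    by rewrite integral_cst //; move: (probability_setT P) => /= ->; rewrite mule1.
  apply: ge0_le_integral => //.
  - move=> w _; rewrite lee_fin /B; apply: mulr_ge0 => //.
    apply: divr_ge0 => //; exact: sNT_ge0.
  - have -> : (fun w => \sum_(j < N) (f j w)%:E) = EFin \o (fun w => \sum_(j < N) f j w).
      by apply: funext => w /=; rewrite sumEFin.
    by apply/measurable_EFinP; apply: measurable_sum.
  - move=> w _; rewrite sumEFin lee_fin /B; exact: (main_det N3 NT (H01 w)).
pose r j := fine (\int[P]_w (f j w)%:E)%E.
have rE j : (\int[P]_w (f j w)%:E)%E = (r j)%:E.
  by rewrite /r fineK //; exact: (integrable_fin_num _ (intf j)).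
have [j Hj] : exists j, B <= r j.
  case: (boolP [exists j, B <= r j]) => [/existsP //|].
  rewrite negb_exists => /forallP Hn.
  have Hlt j : r j < B by rewrite ltNge; apply: Hn.
  have : \sum_(j < N) r j < \sum_(j < N) B.
    apply: ltr_sum => //.
    by apply/hasP; exists (Ordinal (leq_trans (isT : (0 < 3)%N) N3)); rewrite ?mem_index_enum.
  rewrite sumr_const card_ord -mulr_natl.
  move: Hsum; rewrite (eq_bigr _ (fun j _ => rE j)) sumEFin lee_fin; lra.
exists (@bs1 R N), (rhoj eps j); split.
  by move=> t i; rewrite /bs1 /b1 lexx ler01.
split; first exact: rhoj01.
rewrite /rand_exp_regret.
change ((1 / 288 * Num.sqrt (N%:R * T%:R))%:E <= \int[P]_w (f j w)%:E)%E.
rewrite rE lee_fin; move: Hj; rewrite /B /sNT; lra.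
Qed.

Theorem theorem2 (R : realType) :
  exists c : R, 0 < c /\
  forall (N T : nat), (3 <= N)%N -> (N <= T)%N ->
  forall (d : measure_display) (Omega : measurableType d)
         (P : probability Omega R) (pol : Omega -> policy R N),
    (forall w h b i, 0 <= pol w h b i <= 1) ->
    (forall h b i, measurable_fun setT (fun w => pol w h b i)) ->
    exists (bs : nat -> vecR R N) (rho : vecR R N),
      (forall t i, 0 <= bs t i <= 1) /\
      (forall i, 0 <= rho i <= 1) /\
      ((c * Num.sqrt (N%:R * T%:R))%:E <= rand_exp_regret T P pol bs rho)%E.
Proof. exact: theorem2_aux. Qed.
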